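(* Let $p$ be a prime and $S$ a finite $p$-group. If $L$ is a subgroup of $S$ with $\mathfrak{X}(S)\leq L\leq S$, then $\mathfrak{X}(S)\leq \mathfrak{X}(L)$.
   Context: For a finite $p$-group $G$ and subgroups $A,B$, write $[A,B;1]=[A,B]$ and $[A,B;k]=[[A,B;k-1],B]$. $\Omega_1(G)$ denotes the subgroup generated by the elements of order $p$ in $G$. The Oliver subgroup $\mathfrak{X}(G)$ of a finite $p$-group $G$ is the unique largest normal subgroup $K$ of $G$ admitting a chain $1=Q_0\leq Q_1\leq\cdots\leq Q_n=K$ of normal subgroups $Q_i\unlhd G$ such that $[\Omega_1(C_G(Q_{i-1})),Q_i;p-1]=1$ for each $1\leq i\leq n$. For a subgroup $L\leq S$, $\mathfrak{X}(L)$ is the Oliver subgroup of $L$ regarded as a $p$-group in its own right (normality and centralizers taken in $L$). *)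

(* Defs.v *)
From mathcomp Require Import all_boot all_fingroup all_solvable.
From mathcomp Require Import boolp.
Set Implicit Arguments. Unset Strict Implicit. Unset Printing Implicit Defensive.
Local Open Scope group_scope.

Section Oliver.
Variable gT : finGroupType.

Definition Omega1 (p : nat) (A : {set gT}) : {set gT} :=
  <<[set x in A | #[x] == p]>>.

Fixpoint itercomm (A B : {set gT}) (k : nat) : {set gT} :=
  if k is k'.+1 then [~: itercomm A B k', B] else A.

Definition oliver_chain (p : nat) (G K : {set gT}) : Prop :=
  exists (n : nat) (Q : nat -> {group gT}),
    [/\ Q 0%N :=: 1, Q n :=: K,
        forall i, (i < n)%N -> Q i \subset Q i.+1,
        forall i, (i <= n)%N -> Q i <| G &
        forall i, (0 < i <= n)%N ->
          itercomm (Omega1 p 'C_G(Q i.-1)) (Q i) p.-1 :=: 1].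

(* The Oliver subgroup X(G): the join of all subgroups admitting such a
   chain (this is the unique largest one). *)
Definition oliver (p : nat) (G : {set gT}) : {set gT} :=
  <<[set x | `[< exists K : {group gT}, oliver_chain p G K /\ x \in K >] ]>>.

End Oliver.

(* Main.v *)
Require Import Defs.
From mathcomp Require Import all_boot all_fingroup all_solvable.
From mathcomp Require Import boolp.
Local Open Scope group_scope.

Lemma itercommS (gT : finGroupType) (A B C : {set gT}) k :
  A \subset B -> itercomm A C k \subset itercomm B C k.
Proof.
move=> sAB; elim: k => [|k IH] //=.
exact: commgSS.
Qed.

Lemma Omega1S (gT : finGroupType) p (A B : {set gT}) :
  A \subset B -> Omega1 p A \subset Omega1 p B.
Proof.
move=> sAB; apply: genS; apply/subsetP => x; rewrite !inE => /andP[xA ->].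
by rewrite (subsetP sAB).
Qed.

Theorem lemma3p1 (gT : finGroupType) (p : nat) (S L : {group gT}) :
  prime p -> p.-group S -> L \subset S ->
  oliver p S \subset L -> oliver p S \subset oliver p L.
Proof.
move=> _ _ sLS sXL.
rewrite /oliver gen_subG; apply/subsetP => x; rewrite inE => /asboolP[K [chK xK]].
apply: mem_gen; rewrite inE; apply/asboolP; exists K; split => //.
have sKX : K \subset oliver p S.
  apply/subsetP => y yK; apply: mem_gen; rewrite inE; apply/asboolP.
  by exists K.
have sKL := subset_trans sKX sXL.
case: chK => n [Q [Q0 Qn Qinc Qnorm Qcomm]].
have sQK : forall i, (i <= n)%N -> Q i \subset K.
  have H : forall d i, (i + d)%N = n -> Q i \subset K.
    elim=> [|d IH] i e.
      by rewrite addn0 in e; rewrite e Qn.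
    apply: subset_trans (IH i.+1 _); first by apply: Qinc; rewrite -e addnS ltnS leq_addr.
    by rewrite addSnnS.
  by move=> i lein; apply: (H (n - i)%N); rewrite subnKC.
exists n, Q; split => //.
- move=> i lein; apply: normalS (Qnorm i lein) => //.
  exact: subset_trans (sQK i lein) sKL.
- move=> i hi.
  have := @itercommS _ _ _ (Q i) p.-1 (@Omega1S _ p _ _ (setSI 'C(Q i.-1) sLS)).
  rewrite (Qcomm i hi); case: (p.-1) => [|k] /=; rewrite /Omega1 => h; apply/eqP; by rewrite eqEsubset h sub1G.
Qed.
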